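(* In the following setting: $n$ training samples with labels in $\{1,\dots,K\}$, indicator matrix $F\in\mathbb{R}^{K\times n}$, with the same number of samples in every class; basis $G_1,\dots,G_r$ ($r\le n$) a subset of the training samples with the same number ($\ge1$) of basis vectors in every class; $F_{G_i}$ the class indicator of $G_i$; $\tilde W\in\mathbb{R}^{r\times n}$ entrywise nonnegative, columns summing to one, full row rank, with $\tilde W_{ij}=0$ whenever $F_{G_i}\neq F_j$; $\tilde W'=\tilde W+\Delta W$ with $\Delta W\in\mathbb{R}^{r\times n}$; $\xi=\|\tilde W^\dagger\|_2\|\Delta W\|_2$, $\delta=\|\Delta W\|_F/\|\tilde W\|_F$; $X=F\tilde W^\dagger$, $X'=F\tilde W'^\dagger$, $\gamma=\|X\|_F^2\|\tilde W\|_F^2/\|X\tilde W\|_F^2$, $\epsilon'=\|F-X'\tilde W'\|_F^2/\|X'\tilde W'\|_F^2+1$, $\gamma'=\|X'\|_F^2\|\tilde W'\|_F^2/\|X'\tilde W'\|_F^2$. If $\xi<1$, then $$\epsilon'\le\frac{\xi^2}{(1-\xi)^2}+1,\qquad \gamma'\le\gamma(1+\delta)^2\Big(1+\frac{2\xi}{1-\xi}\Big)^2\le\gamma\frac{(1+\xi)^4}{(1-\xi)^2}.$$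
   Context: The columns of $F$ are standard basis vectors of $\mathbb{R}^K$: $F_j=e_k$ iff sample $j$ is in class $k$. $\|\cdot\|_2$ of a matrix is the spectral norm; $M^\dagger$ is the Moore–Penrose pseudo-inverse. *)

(* Defs.v *)
From HB Require Import structures.
From mathcomp Require Import all_boot all_order all_algebra.
From mathcomp Require Import boolp classical_sets reals.
Set Implicit Arguments. Unset Strict Implicit. Unset Printing Implicit Defensive.
Import Order.TTheory GRing.Theory Num.Theory.
Local Open Scope ring_scope.
Local Open Scope classical_set_scope.

Definition frob {R : realType} {m n : nat} (A : 'M[R]_(m, n)) : R :=
  Num.sqrt (\sum_(i < m) \sum_(j < n) A i j ^+ 2).

Definition spec_norm {R : realType} {m n : nat} (A : 'M[R]_(m, n)) : R :=
  sup [set frob (A *m v) | v in [set v : 'cV[R]_n | frob v <= 1]].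

Definition penrose {R : realType} {m n : nat} (A : 'M[R]_(m, n)) (B : 'M[R]_(n, m)) : Prop :=
  [/\ A *m B *m A = A, B *m A *m B = B, (A *m B)^T = A *m B & (B *m A)^T = B *m A].

(* Moore-Penrose pseudo-inverse (it exists and is unique for every real matrix) *)
Definition pinv {R : realType} {m n : nat} (A : 'M[R]_(m, n)) : 'M[R]_(n, m) :=
  match pselect (exists B, penrose A B) with
  | left h => proj1_sig (cid h)
  | right _ => 0
  end.

Definition indic {R : realType} {K n : nat} (lab : 'I_n -> 'I_K) : 'M[R]_(K, n) :=
  \matrix_(k < K, j < n) (lab j == k)%:R.

(* Main.v *)
Require Import Defs.
From HB Require Import structures.
From mathcomp Require Import all_boot all_order all_algebra.
From mathcomp Require Import boolp classical_sets reals.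
From mathcomp Require Import ring lra.
Set Implicit Arguments. Unset Strict Implicit. Unset Printing Implicit Defensive.
Import Order.TTheory GRing.Theory Num.Theory.
Local Open Scope ring_scope.

Section Frob.
Variable R : realType.

Definition dot {m n} (A B : 'M[R]_(m, n)) : R := \sum_i \sum_j A i j * B i j.

Lemma sq_le (x y : R) : 0 <= x -> 0 <= y -> x ^+ 2 <= y ^+ 2 -> x <= y.
Proof. move=> *; nra. Qed.

Lemma le_cancel (t k : R) : 0 <= t -> 0 <= k -> t ^+ 2 <= k * t -> t <= k.
Proof.
move=> t0 k0 h; have [->//|tp] := eqVneq t 0.
have tp' : 0 < t by rewrite lt_def tp t0.
by rewrite -(ler_pM2r tp') -expr2.
Qed.

Lemma dotC m n (A B : 'M[R]_(m, n)) : dot A B = dot B A.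
Proof. by apply: eq_bigr => i _; apply: eq_bigr => j _; rewrite mulrC. Qed.

Lemma dotDl m n (A B C : 'M[R]_(m, n)) : dot (A + B) C = dot A C + dot B C.
Proof.
rewrite /dot -big_split; apply: eq_bigr => i _; rewrite -big_split.
by apply: eq_bigr => j _; rewrite !mxE mulrDl.
Qed.

Lemma dotZl m n a (A C : 'M[R]_(m, n)) : dot (a *: A) C = a * dot A C.
Proof.
rewrite /dot mulr_sumr; apply: eq_bigr => i _; rewrite mulr_sumr.
by apply: eq_bigr => j _; rewrite !mxE mulrA.
Qed.

Lemma dotNl m n (A C : 'M[R]_(m, n)) : dot (- A) C = - dot A C.
Proof. by rewrite -scaleN1r dotZl mulN1r. Qed.

Lemma dotDr m n (A B C : 'M[R]_(m, n)) : dot C (A + B) = dot C A + dot C B.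
Proof. by rewrite dotC dotDl !(dotC C). Qed.
Lemma dotZr m n a (A C : 'M[R]_(m, n)) : dot C (a *: A) = a * dot C A.
Proof. by rewrite dotC dotZl dotC. Qed.
Lemma dotNr m n (A C : 'M[R]_(m, n)) : dot C (- A) = - dot C A.
Proof. by rewrite dotC dotNl dotC. Qed.

Lemma dot_ge0 m n (A : 'M[R]_(m, n)) : 0 <= dot A A.
Proof. by apply: sumr_ge0 => i _; apply: sumr_ge0 => j _; rewrite -expr2 sqr_ge0. Qed.

Lemma frob_dot m n (A : 'M[R]_(m, n)) : frob A = Num.sqrt (dot A A).
Proof.
by rewrite /frob /dot; congr Num.sqrt; apply: eq_bigr => i _; apply: eq_bigr => j _; rewrite expr2.
Qed.

Lemma frob_ge0 m n (A : 'M[R]_(m, n)) : 0 <= frob A.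
Proof. exact: sqrtr_ge0. Qed.

Lemma frob_sq m n (A : 'M[R]_(m, n)) : frob A ^+ 2 = dot A A.
Proof. by rewrite frob_dot sqr_sqrtr // dot_ge0. Qed.

Lemma frob_eq0 m n (A : 'M[R]_(m, n)) : frob A = 0 -> A = 0.
Proof.
move=> h; have : dot A A = 0 by rewrite -frob_sq h expr2 mulr0.
move=> H.
have H1 : forall i, \sum_j A i j * A i j = 0.
  move=> i; apply: (psumr_eq0P _ H) => // i' _.
  by apply: sumr_ge0 => j _; rewrite -expr2 sqr_ge0.
apply/matrixP => i j; rewrite mxE.
have H3 : forall k : 'I_n, true -> 0 <= A i k * A i k.
  by move=> k _; rewrite -expr2 sqr_ge0.
have /eqP := psumr_eq0P H3 (H1 i) (i:=j) isT.
by rewrite mulf_eq0 orbb => /eqP.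
Qed.

Lemma dot_tr m n (A B : 'M[R]_(m, n)) : dot A B = \tr (A *m B^T).
Proof.
rewrite /dot /mxtrace; apply: eq_bigr => i _; rewrite mxE.
by apply: eq_bigr => j _; rewrite mxE.
Qed.

Lemma dot_mulr m n p (A : 'M[R]_(m, n)) (B : 'M[R]_(n, p)) Z :
  dot (A *m B) Z = dot A (Z *m B^T).
Proof. by rewrite !dot_tr trmx_mul trmxK mulmxA. Qed.

Lemma dot_trmx m n (A B : 'M[R]_(m, n)) : dot A^T B^T = dot A B.
Proof. by rewrite /dot exchange_big; apply: eq_bigr => i _; apply: eq_bigr => j _; rewrite !mxE. Qed.

Lemma frob_tr m n (A : 'M[R]_(m, n)) : frob A^T = frob A.
Proof. by rewrite !frob_dot dot_trmx. Qed.

Lemma CS m n (A B : 'M[R]_(m, n)) : dot A B <= frob A * frob B.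
Proof.
have [a0|a0] := eqVneq (frob A) 0.
  rewrite a0 mul0r (frob_eq0 a0) /dot big1 // => i _; rewrite big1 // => j _; by rewrite mxE mul0r.
have [b0|b0] := eqVneq (frob B) 0.
  rewrite b0 mulr0 (frob_eq0 b0) /dot big1 // => i _; rewrite big1 // => j _; by rewrite mxE mulr0.
set a := frob A in a0 *; set b := frob B in b0 *.
have ap : 0 < a by rewrite lt_def a0 frob_ge0.
have bp : 0 < b by rewrite lt_def b0 frob_ge0.
have := dot_ge0 (b *: A - a *: B).
rewrite !(dotDl, dotDr, dotNl, dotNr, dotZl, dotZr) -!frob_sq -/a -/b (dotC B A).
move=> h.
have h2 : 0 <= (a * b) * (2 * (a * b - dot A B)) by nra.
have abp : 0 < a * b by rewrite mulr_gt0.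
rewrite pmulr_rge0 // in h2; lra.
Qed.

Lemma frob_triangle m n (A B : 'M[R]_(m, n)) : frob (A + B) <= frob A + frob B.
Proof.
apply: sq_le; rewrite ?addr_ge0 ?frob_ge0 //.
rewrite frob_sq !(dotDl, dotDr) -!frob_sq (dotC B A).
have := CS A B; nra.
Qed.

Lemma frobN m n (A : 'M[R]_(m, n)) : frob (- A) = frob A.
Proof. by rewrite !frob_dot dotNl dotNr opprK. Qed.

Lemma frob_sub m n (A B : 'M[R]_(m, n)) : frob (A - B) <= frob A + frob B.
Proof. by rewrite -(frobN B) frob_triangle. Qed.

Lemma frobZ m n a (A : 'M[R]_(m, n)) : frob (a *: A) = `|a| * frob A.
Proof. by rewrite !frob_dot dotZl dotZr mulrA -expr2 sqrtrM ?sqr_ge0 // sqrtr_sqr. Qed.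

Lemma frob0 m n : frob (0 : 'M[R]_(m, n)) = 0.
Proof. by rewrite -(scale0r 0) frobZ normr0 mul0r. Qed.


Lemma dot_outer m n (x : 'cV[R]_m) (y : 'cV[R]_n) :
  dot (x *m y^T) (x *m y^T) = dot x x * dot y y.
Proof.
rewrite /dot mulr_suml; apply: eq_bigr => i _; rewrite mulr_sumr big_ord1.
apply: eq_bigr => j _; rewrite big_ord1 !mxE !big_ord1 !mxE; ring.
Qed.

Lemma frob_outer m n (x : 'cV[R]_m) (y : 'cV[R]_n) :
  frob (x *m y^T) = frob x * frob y.
Proof. by rewrite !frob_dot dot_outer sqrtrM // dot_ge0. Qed.

Lemma frob_mulv m n (A : 'M[R]_(m, n)) (v : 'cV[R]_n) :
  frob (A *m v) <= frob A * frob v.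
Proof.
apply: le_cancel; rewrite ?mulr_ge0 ?frob_ge0 //.
rewrite frob_sq dot_mulr.
apply: (le_trans (CS _ _)); rewrite frob_outer; by rewrite le_eqVlt; apply/orP; left; apply/eqP; ring.
Qed.

Definition sset m n (A : 'M[R]_(m, n)) :=
  [set frob (A *m v) | v in [set v : 'cV[R]_n | frob v <= 1]]%classic.

Lemma sset_sup m n (A : 'M[R]_(m, n)) : has_sup (sset A).
Proof.
split; first by exists (frob (A *m (0 : 'cV[R]_n))); exists 0 => //=; rewrite frob0.
exists (frob A) => y [v /= hv <-].
apply: (le_trans (frob_mulv _ _)); rewrite -{2}(mulr1 (frob A)).
by rewrite ler_wpM2l ?frob_ge0.
Qed.

Lemma spec_ge0 m n (A : 'M[R]_(m, n)) : 0 <= spec_norm A.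
Proof.
apply: (le_trans _ (sup_upper_bound (sset_sup A) _)); last first.
  by exists (0 : 'cV[R]_n) => //=; rewrite frob0.
by rewrite mulmx0 frob0.
Qed.

Lemma spec_ub m n (A : 'M[R]_(m, n)) (v : 'cV[R]_n) :
  frob (A *m v) <= spec_norm A * frob v.
Proof.
have [v0|v0] := eqVneq (frob v) 0.
  by rewrite (frob_eq0 v0) mulmx0 frob0 frob0 mulr0.
have vp : 0 < frob v by rewrite lt_def v0 frob_ge0.
have h : sset A (frob (A *m ((frob v)^-1 *: v))).
  exists ((frob v)^-1 *: v) => //=.
  by rewrite frobZ ger0_norm ?invr_ge0 ?frob_ge0 // mulVf.
have := sup_upper_bound (sset_sup A) h.
rewrite -scalemxAr frobZ ger0_norm ?invr_ge0 ?frob_ge0 //.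
by rewrite ler_pdivrMl // mulrC.
Qed.

Lemma spec_le m n (A : 'M[R]_(m, n)) b :
  (forall v : 'cV[R]_n, frob v <= 1 -> frob (A *m v) <= b) -> spec_norm A <= b.
Proof.
move=> h; apply: ge_sup; first by exists (frob (A *m (0 : 'cV[R]_n))); exists 0 => //=; rewrite frob0.
by move=> y [v /= hv <-]; apply: h.
Qed.

Lemma spec_mul m n p (A : 'M[R]_(m, n)) (B : 'M[R]_(n, p)) :
  spec_norm (A *m B) <= spec_norm A * spec_norm B.
Proof.
apply: spec_le => v hv; rewrite -mulmxA.
apply: (le_trans (spec_ub _ _)); rewrite ler_wpM2l ?spec_ge0 //.
apply: (le_trans (spec_ub _ _)); rewrite -{2}(mulr1 (spec_norm B)).
by rewrite ler_wpM2l ?spec_ge0.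
Qed.

Lemma dot_cols m n (X : 'M[R]_(m, n)) : dot X X = \sum_j dot (col j X) (col j X).
Proof.
rewrite /dot exchange_big; apply: eq_bigr => j _; apply: eq_bigr => i _.
by rewrite big_ord1 !mxE.
Qed.

Lemma col_mulmx m n p (A : 'M[R]_(m, n)) (B : 'M[R]_(n, p)) j :
  col j (A *m B) = A *m col j B.
Proof. by apply/matrixP => i k; rewrite !mxE; apply: eq_bigr => l _; rewrite !mxE. Qed.

Lemma frob_2F m n p (A : 'M[R]_(m, n)) (B : 'M[R]_(n, p)) :
  frob (A *m B) <= spec_norm A * frob B.
Proof.
apply: sq_le; rewrite ?mulr_ge0 ?frob_ge0 ?spec_ge0 //.
rewrite frob_sq exprMn frob_sq !dot_cols mulr_sumr; apply: ler_sum => j _.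
rewrite col_mulmx -!frob_sq -exprMn; apply: lerXn2r; rewrite ?nnegrE ?frob_ge0 ?mulr_ge0 ?spec_ge0 ?frob_ge0 //.
exact: spec_ub.
Qed.

Lemma frob_F2 m n p (A : 'M[R]_(m, n)) (B : 'M[R]_(n, p)) :
  frob (A *m B) <= frob A * spec_norm B.
Proof.
apply: le_cancel; rewrite ?mulr_ge0 ?frob_ge0 ?spec_ge0 //.
rewrite frob_sq dot_mulr; apply: (le_trans (CS _ _)).
rewrite -mulrA ler_wpM2l ?frob_ge0 //.
rewrite -frob_tr trmx_mul trmxK -(frob_tr (A *m B)); exact: frob_2F.
Qed.

Lemma frob_proj m n (V : 'M[R]_(m, n)) (Q : 'M[R]_n) :
  Q^T = Q -> Q *m Q = Q -> frob (V *m Q) <= frob V.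
Proof.
move=> hT hQ; apply: le_cancel; rewrite ?frob_ge0 //.
by rewrite frob_sq dot_mulr hT -mulmxA hQ; apply: CS.
Qed.


Lemma pinv_penrose m n (A : 'M[R]_(m, n)) :
  (exists B, penrose A B) -> penrose A (pinv A).
Proof. by move=> h; rewrite /pinv; case: pselect => // h'; exact: (proj2_sig (cid h')). Qed.

Lemma free_penrose m n (A : 'M[R]_(m, n)) : row_free A -> exists B, penrose A B.
Proof.
move=> hA.
have hU : A *m A^T \in unitmx.
  rewrite -row_free_unit; apply: inj_row_free => v hv.
  have h0 : frob (v *m A) = 0.
    rewrite frob_dot dot_tr trmx_mul !mulmxA -(mulmxA v) hv mul0mx.
    by rewrite mxtrace0 sqrtr0.
  by apply/eqP; rewrite -(mulmx_free_eq0 _ hA); apply/eqP; apply: frob_eq0.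
exists (A^T *m invmx (A *m A^T)).
have h1 : A *m (A^T *m invmx (A *m A^T)) = 1%:M by rewrite mulmxA mulmxV.
split.
- by rewrite h1 mul1mx.
- by rewrite -!mulmxA h1 mulmx1.
- by rewrite h1 trmx1.
- rewrite !trmx_mul trmx_inv trmx_mul trmxK; by rewrite mulmxA.
Qed.

Lemma pinv_right m n (A : 'M[R]_(m, n)) : row_free A -> A *m pinv A = 1%:M.
Proof.
move=> hA; have [h1 h2 h3 h4] := pinv_penrose (free_penrose hA).
set P := A *m pinv A in h1 h3 *.
have hPP : P *m P = P by rewrite /P mulmxA h1.
have hPu : P \in unitmx.
  rewrite -row_free_unit /row_free; apply/eqP/anti_leq.
  rewrite rank_leq_row /=; move: hA; rewrite /row_free => /eqP {1}<-.
  by rewrite -{1}h1 mxrankM_maxl.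
transitivity (invmx P *m (P *m P)); first by rewrite mulmxA mulVmx // mul1mx.
by rewrite hPP mulVmx.
Qed.

End Frob.

Unset Implicit Arguments.

Lemma div_sq_le (R : realType) (e N a b : R) : 0 <= e -> 0 < N -> 0 <= a -> 0 < b ->
  e * b <= a * N -> e ^+ 2 / N ^+ 2 <= a ^+ 2 / b ^+ 2.
Proof.
move=> e0 N0 a0 b0 h.
rewrite ler_pdivrMr ?exprn_gt0 // mulrAC ler_pdivlMr ?exprn_gt0 //.
rewrite -!exprMn; have eb : 0 <= e * b := mulr_ge0 e0 (ltW b0).
nra.
Qed.

Theorem corollary3 (R : realType) (K n r : nat)
  (lab : 'I_n -> 'I_K)            (* labels of the training samples *)
  (g : 'I_r -> 'I_n)              (* basis G_i = training sample g i *)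
  (Wt dW : 'M[R]_(r, n)) :
  (* same number of samples in every class *)
  (forall k1 k2 : 'I_K, #|[set j | lab j == k1]| = #|[set j | lab j == k2]|) ->
  (r <= n)%N -> injective g ->
  (* same number (>= 1) of basis vectors in every class *)
  (forall k1 k2 : 'I_K, #|[set i | lab (g i) == k1]| = #|[set i | lab (g i) == k2]|) ->
  (forall k : 'I_K, (0 < #|[set i | lab (g i) == k]|)%N) ->
  (forall i j, 0 <= Wt i j) ->
  (forall j, \sum_(i < r) Wt i j = 1) ->
  \rank Wt = r ->
  (forall i j, lab (g i) != lab j -> Wt i j = 0) ->
  let F : 'M[R]_(K, n) := indic lab in
  let Wp := Wt + dW in
  let xi := spec_norm (pinv Wt) * spec_norm dW in
  let delta := frob dW / frob Wt in
  let X := F *m pinv Wt in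
  let X' := F *m pinv Wp in
  let gamma := frob X ^+ 2 * frob Wt ^+ 2 / frob (X *m Wt) ^+ 2 in
  let eps' := frob (F - X' *m Wp) ^+ 2 / frob (X' *m Wp) ^+ 2 + 1 in
  let gamma' := frob X' ^+ 2 * frob Wp ^+ 2 / frob (X' *m Wp) ^+ 2 in
  xi < 1 ->
  eps' <= xi ^+ 2 / (1 - xi) ^+ 2 + 1 /\
  gamma' <= gamma * (1 + delta) ^+ 2 * (1 + 2 * xi / (1 - xi)) ^+ 2 /\
  gamma * (1 + delta) ^+ 2 * (1 + 2 * xi / (1 - xi)) ^+ 2
    <= gamma * (1 + xi) ^+ 4 / (1 - xi) ^+ 2.
Proof.
move=> _ _ _ _ _ _ hsum hrank hz F Wp xi delta X X' gamma eps' gamma' hxi.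
set B := pinv Wt; set B' := pinv Wp.
set p := spec_norm B; set d := spec_norm dW.
have p0 : 0 <= p by apply: spec_ge0.
have d0 : 0 <= d by apply: spec_ge0.
have xi0 : 0 <= xi by rewrite mulr_ge0.
have hfree : row_free Wt by rewrite /row_free hrank.
have hWB : Wt *m B = 1%:M by apply: pinv_right.
pose C : 'M[R]_(K, r) := \matrix_(k, i) (lab (g i) == k)%:R.
have hF : F = C *m Wt.
  apply/matrixP => k j; rewrite !mxE.
  rewrite (eq_bigr (fun i => (lab j == k)%:R * Wt i j)).
    by rewrite -mulr_sumr hsum mulr1.
  move=> i _; rewrite mxE.
  have [e|ne] := eqVneq (lab (g i)) (lab j); first by rewrite e.
  by rewrite hz // !mulr0.
have hX : X = C by rewrite /X hF -mulmxA hWB mulmx1.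
have eWt : Wt = Wp - dW by rewrite /Wp addrK.
have hZ : forall m (Z : 'M[R]_(m, r)), (1 - xi) * frob Z <= p * frob (Z *m Wp).
  move=> m Z.
  have h1 : frob Z <= frob (Z *m Wt) * p.
    by rewrite -{1}(mulmx1 Z) -hWB mulmxA; apply: frob_F2.
  have h2 : frob (Z *m Wt) <= frob (Z *m Wp) + frob Z * d.
    rewrite eWt mulmxBr; apply: (le_trans (frob_sub _ _)).
    by rewrite lerD2l; apply: frob_F2.
  have h3 := frob_ge0 Z; have h4 := frob_ge0 (Z *m Wp).
  rewrite /xi -/p -/d; nra.
have hWpfree : row_free Wp.
  apply: inj_row_free => v hv; apply: frob_eq0.
  have := hZ _ v; rewrite hv frob0 mulr0 => h.
  have := frob_ge0 v; nra.
have hWpB : Wp *m B' = 1%:M by apply: pinv_right.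
have [e1 e2 e3 e4] := pinv_penrose (free_penrose hWpfree).
rewrite -/B' in e1 e2 e3 e4.
set P := B' *m Wp in e4.
have PP : P *m P = P by rewrite /P mulmxA e2.
pose Q := 1%:M - P.
have QT : Q^T = Q by rewrite /Q linearB /= trmx1 e4.
have QQ : Q *m Q = Q.
  by rewrite /Q mulmxBl mul1mx mulmxBr mulmx1 PP subrr subr0.
set c := frob C; set A := frob F; set N := frob (X' *m Wp).
set w := frob Wt.
have hXWp : X' *m Wp = F *m P by rewrite /X' /P mulmxA.
have c0 : 0 <= c := frob_ge0 _.
have A0 : 0 <= A := frob_ge0 _.
have N0 : 0 <= N := frob_ge0 _.
have w0 : 0 <= w := frob_ge0 _.
have f1 : c <= p * A.
  rewrite /c -(mulmx1 C) -hWB mulmxA -hF mulrC; apply: frob_F2.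
have hCdW : frob (C *m dW) <= c * d by apply: frob_F2.
have WpQ : Wp *m Q = 0 by rewrite /Q mulmxBr mulmx1 /P mulmxA e1 subrr.
have f2 : frob (F - X' *m Wp) <= c * d.
  have -> : F - X' *m Wp = - (C *m dW *m Q).
    have -> : F - X' *m Wp = F *m Q by rewrite hXWp /Q mulmxBr mulmx1.
    by rewrite hF eWt -mulmxA mulmxBl WpQ sub0r mulmxN mulmxA.
  by rewrite frobN; apply: le_trans hCdW; apply: frob_proj.
set e := frob (F - X' *m Wp); set Xp := frob X'.
have e0 : 0 <= e := frob_ge0 _.
have Xp0 : 0 <= Xp := frob_ge0 _.
have f3 : A <= N + e.
  have -> : A = frob (X' *m Wp + (F - X' *m Wp)) by rewrite addrC subrK.
  exact: frob_triangle.
have PT : P^T = P by [].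
have f4 : (1 - xi) * Xp <= c.
  have hX' : X' = C - C *m dW *m B'.
    by rewrite /X' -/B' hF eWt -mulmxA mulmxBl hWpB mulmxBr mulmx1 mulmxA.
  have hU := hZ _ (C *m dW *m B').
  have hU2 : frob (C *m dW *m B' *m Wp) <= c * d.
    by rewrite -mulmxA -/P; apply: le_trans hCdW; apply: frob_proj.
  have hXp : Xp <= c + frob (C *m dW *m B') by rewrite /Xp hX'; apply: frob_sub.
  have := frob_ge0 (C *m dW *m B').
  rewrite /xi -/p -/d in hU hxi xi0 *; nra.
have f5 : (1 - xi) * Xp <= p * N by apply: hZ.
have f6 : N <= A by rewrite /N hXWp; apply: frob_proj.
have hdW : frob dW <= w * xi.
  have -> : dW = Wt *m (B *m dW) by rewrite mulmxA hWB mul1mx.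
  apply: (le_trans (frob_F2 _ _)); rewrite ler_wpM2l //; exact: spec_mul.
have fdW0 : 0 <= frob dW := frob_ge0 _.
have fWp : frob Wp <= w * (1 + delta).
  apply: (le_trans (frob_triangle _ _)); rewrite -/w.
  have [w00|w00] := eqVneq w 0.
    rewrite w00 in hdW *; nra.
  rewrite /delta -/w mulrDr mulr1 mulrC divfK //.
have delta0 : 0 <= delta by rewrite /delta divr_ge0.
have deltaxi : delta <= xi.
  rewrite /delta -/w; have [w00|w00] := eqVneq w 0.
    by rewrite w00 invr0 mulr0.
  have wp : 0 < w by rewrite lt_def w00 w0.
  by rewrite ler_pdivrMr // mulrC.
have xi1 : 0 < 1 - xi by rewrite subr_gt0.
have xi1' : 1 - xi != 0 by rewrite gt_eqF.
have hgam : gamma = c ^+ 2 * w ^+ 2 / A ^+ 2.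
  by rewrite /gamma hX -hF.
have gam0 : 0 <= gamma by rewrite hgam divr_ge0 ?mulr_ge0 ?sqr_ge0.
have E2 : 1 + 2 * xi / (1 - xi) = (1 + xi) / (1 - xi) by field.
split; last split.
- rewrite /eps' -/e -/N lerD2r.
  have [N00|N00] := eqVneq N 0.
    by rewrite N00 expr0n /= invr0 mulr0 divr_ge0 ?sqr_ge0.
  have Np : 0 < N by rewrite lt_def N00 N0.
  apply: div_sq_le => //.
  have : c * d <= p * A * d by rewrite ler_wpM2r.
  have : xi * A <= xi * (N + e) by rewrite ler_wpM2l.
  rewrite /xi -/p -/d in xi0 hxi *; move=> h1 h2; have h3 : e <= c * d := f2; nra.
- rewrite /gamma' -/N -/Xp.
  have [N00|N00] := eqVneq N 0.
    rewrite N00 expr0n /= invr0 mulr0.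
    by rewrite mulr_ge0 ?sqr_ge0 // mulr_ge0 ?sqr_ge0.
  have Np : 0 < N by rewrite lt_def N00 N0.
  have Ap : 0 < A by apply: lt_le_trans f6.
  have K1 : Xp * A * (1 - xi) <= c * N * (1 + xi).
    set Y := (1 - xi) * Xp in f4 f5.
    have Y0 : 0 <= Y by rewrite mulr_ge0 // ltW.
    have cd0 : 0 <= c * d by rewrite mulr_ge0.
    have s1 : Y * A <= Y * (N + c * d).
      by rewrite ler_wpM2l //; apply: (le_trans f3); rewrite lerD2l.
    have s3 : Y * N <= c * N by rewrite ler_wpM2r.
    have s4 : Y * (c * d) <= (p * N) * (c * d) by rewrite ler_wpM2r.
    have -> : Xp * A * (1 - xi) = Y * A by rewrite /Y; ring.
    rewrite /xi -/p -/d in s1 s3 s4 *; nra.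
  rewrite E2 hgam.
  have -> : c ^+ 2 * w ^+ 2 / A ^+ 2 * (1 + delta) ^+ 2 * ((1 + xi) / (1 - xi)) ^+ 2
     = (c * w * (1 + delta) * (1 + xi)) ^+ 2 / (A * (1 - xi)) ^+ 2.
    by field; rewrite xi1' gt_eqF.
  rewrite -exprMn; apply: div_sq_le; rewrite ?mulr_ge0 ?addr_ge0 ?frob_ge0 //.
  + by rewrite mulr_gt0.
  + have h := ler_pM (mulr_ge0 (mulr_ge0 Xp0 A0) (ltW xi1)) (frob_ge0 Wp) K1 fWp.
    have -> : Xp * frob Wp * (A * (1 - xi)) = Xp * A * (1 - xi) * frob Wp by ring.
    apply: (le_trans h); rewrite le_eqVlt; apply/orP; left; apply/eqP; ring.
- rewrite E2.
  have -> : gamma * (1 + xi) ^+ 4 / (1 - xi) ^+ 2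
      = gamma * (1 + xi) ^+ 2 * ((1 + xi) / (1 - xi)) ^+ 2 by field.
  apply: ler_wpM2r; first by rewrite sqr_ge0.
  apply: ler_wpM2l => //; nra.
Qed.
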